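(* Let $p\ge1$ and $\ell,\ell'\in(0,+\infty)$. Then the function \[ c\mapsto \mathscr{f}_p(\ell,\ell',c)=\int_{-\ell}^{\ell}\int_{-\ell'}^{\ell'}|x-y-c|^p\,\mathrm{d}y\,\mathrm{d}x,\qquad c\in\mathbb{R}, \] has $c=0$ as its unique minimiser. *)

(* Defs.v *)
From Stdlib Require Import Reals.
From Coquelicot Require Import Coquelicot.
Open Scope R_scope.

(* |t|^p for a real exponent p > 0, with the usual convention 0^p = 0
   (Stdlib's Rpower is exp (p * ln x), only meaningful for x > 0). *)
Definition abspow (t p : R) : R :=
  if Req_EM_T t 0 then 0 else Rpower (Rabs t) p.

Definition fp (p l l' c : R) : R :=
  RInt (fun x => RInt (fun y => abspow (x - y - c) p) (- l') l') (- l) l.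

(* Main.v *)
Require Import Defs.
From Stdlib Require Import Reals Lra Psatz.
From Coquelicot Require Import Coquelicot.
Open Scope R_scope.

Lemma Rpower_pos x y : 0 < Rpower x y.
Proof. unfold Rpower; apply exp_pos. Qed.

Lemma Rpower_1base y : Rpower 1 y = 1.
Proof. unfold Rpower; rewrite ln_1, Rmult_0_r; apply exp_0. Qed.

Lemma Rpower_split s p : 0 < s -> Rpower s p = Rpower s (p - 1) * s.
Proof.
  intros Hs. rewrite <- (Rpower_1 s) at 3 by lra.
  rewrite <- Rpower_plus. f_equal; ring.
Qed.

Lemma tangent p s u : 1 <= p -> 0 < s -> 0 <= u ->
  Rpower s p + p * Rpower s (p - 1) * (u - s) <= abspow u p.
Proof.
  intros Hp Hs Hu. unfold abspow.
  destruct (Req_EM_T u 0) as [->|Hu0].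
  - destruct (Req_EM_T 0 0); [|lra]. rewrite (Rpower_split s p Hs). pose proof (Rpower_pos s (p-1)). assert (0 <= Rpower s (p-1) * s * (p-1)) by (apply Rmult_le_pos; [apply Rmult_le_pos|]; lra). nra.
  - rewrite Rabs_pos_eq by lra.
    assert (Hu' : 0 < u) by lra.
    destruct (MVT_gen (fun x => Rpower x p) s u (fun x => p * Rpower x (p - 1))) as [c [Hc Heq]].
    + cbv zeta. intros x Hx. apply is_derive_Reals. apply derivable_pt_lim_power.
      pose proof (Rmin_glb_lt s u 0). unfold Rmin in *. destruct (Rle_dec s u); lra.
    + cbv zeta. intros x Hx. apply derivable_continuous_pt. exists (p * Rpower x (p - 1)).
      apply derivable_pt_lim_power. unfold Rmin in Hx. destruct (Rle_dec s u); lra.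
    + unfold Rmin, Rmax in Hc. simpl in Heq.
      assert (Hc0 : 0 < c) by (destruct (Rle_dec s u); lra).
      destruct (Rle_dec s u) as [Hsu|Hsu].
      * assert (Rpower s (p-1) <= Rpower c (p-1)) by (apply Rle_Rpower_l; lra).
        assert (0 <= p * ((Rpower c (p-1) - Rpower s (p-1)) * (u - s))) by (apply Rmult_le_pos; [lra| apply Rmult_le_pos; lra]).
        nra.
      * assert (Rpower c (p-1) <= Rpower s (p-1)) by (apply Rle_Rpower_l; lra).
        assert (0 <= p * ((Rpower s (p-1) - Rpower c (p-1)) * (s - u))) by (apply Rmult_le_pos; [lra| apply Rmult_le_pos; lra]).
        nra.
Qed.

Lemma abspow_nonneg t p : 0 <= abspow t p.
Proof. unfold abspow; destruct (Req_EM_T t 0); [lra|]. pose proof (Rpower_pos (Rabs t) p); lra. Qed.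

Lemma abspow_pos_eq u p : 0 < u -> abspow u p = Rpower u p.
Proof. intros H; unfold abspow; destruct (Req_EM_T u 0); [lra|]. rewrite Rabs_pos_eq; lra. Qed.

Lemma abspow_abs t p : abspow t p = abspow (Rabs t) p.
Proof.
  unfold abspow. destruct (Req_EM_T (Rabs t) 0) as [H'|H']; destruct (Req_EM_T t 0) as [H|H].
  - reflexivity.
  - apply Rabs_eq_0 in H'; lra.
  - subst; rewrite Rabs_R0 in H'; lra.
  - rewrite Rabs_Rabsolu; reflexivity.
Qed.

Lemma abspow_opp t p : abspow (- t) p = abspow t p.
Proof. rewrite (abspow_abs (- t)), Rabs_Ropp, <- abspow_abs; reflexivity. Qed.

Lemma abspow_mono u v p : 0 <= p -> 0 <= u <= v -> abspow u p <= abspow v p.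
Proof.
  intros Hp Huv. destruct (Req_dec u 0) as [->|Hu].
  - unfold abspow at 1; destruct (Req_EM_T 0 0); [|lra]. apply abspow_nonneg.
  - rewrite !abspow_pos_eq by lra. apply Rle_Rpower_l; lra.
Qed.

Lemma midpoint p a b : 1 <= p -> 0 <= a -> 0 <= b ->
  2 * abspow ((a + b) / 2) p <= abspow a p + abspow b p.
Proof.
  intros Hp Ha Hb. destruct (Req_dec (a + b) 0) as [H0|H0].
  - assert (a = 0) by lra. assert (b = 0) by lra. subst.
    replace ((0+0)/2) with 0 by field. lra.
  - set (s := (a + b) / 2). assert (Hs : 0 < s) by (unfold s; lra).
    pose proof (tangent p s a Hp Hs Ha). pose proof (tangent p s b Hp Hs Hb).
    rewrite (abspow_pos_eq s p Hs).
    assert (a - s + (b - s) = 0) by (unfold s; field).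
    nra.
Qed.


Lemma h_nonneg p c t : 1 <= p -> 2 * abspow t p <= abspow (t - c) p + abspow (t + c) p.
Proof.
  intros Hp. rewrite (abspow_abs t), (abspow_abs (t - c)), (abspow_abs (t + c)).
  pose proof (midpoint p (Rabs (t - c)) (Rabs (t + c)) Hp (Rabs_pos _) (Rabs_pos _)).
  assert (abspow (Rabs t) p <= abspow ((Rabs (t - c) + Rabs (t + c)) / 2) p).
  { apply abspow_mono; [lra|]. split; [apply Rabs_pos|].
    unfold Rabs; repeat destruct Rcase_abs; lra. }
  lra.
Qed.

Lemma h_lower p c t : 1 <= p -> c <> 0 -> Rabs t <= Rabs c / 2 ->
  2 * (Rpower (Rabs c) p - Rpower (Rabs c / 2) p) + 2 * abspow t p
  <= abspow (t - c) p + abspow (t + c) p.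
Proof.
  intros Hp Hc Ht. pose proof (Rabs_pos_lt c Hc) as Hc0.
  rewrite (abspow_abs t), (abspow_abs (t - c)), (abspow_abs (t + c)).
  pose proof (midpoint p (Rabs (t - c)) (Rabs (t + c)) Hp (Rabs_pos _) (Rabs_pos _)).
  assert (abspow (Rabs c) p <= abspow ((Rabs (t - c) + Rabs (t + c)) / 2) p).
  { apply abspow_mono; [lra|]. split; [apply Rabs_pos|].
    revert Ht; unfold Rabs; repeat destruct Rcase_abs; lra. }
  assert (abspow (Rabs t) p <= abspow (Rabs c / 2) p).
  { apply abspow_mono; [lra|]. split; [apply Rabs_pos|lra]. }
  rewrite (abspow_pos_eq (Rabs c)) in * by lra. rewrite (abspow_pos_eq (Rabs c / 2)) in * by lra. lra.
Qed.

Lemma Rpower_le_self u p : 1 <= p -> 0 < u <= 1 -> Rpower u p <= u.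
Proof.
  intros Hp Hu. unfold Rpower. rewrite <- (exp_ln u) at 2 by lra.
  assert (ln u <= 0). { rewrite <- ln_1. destruct (Req_dec u 1) as [->|]; [lra|].
    left; apply ln_increasing; lra. }
  destruct (Req_dec (p * ln u) (ln u)) as [->|]; [lra|].
  left; apply exp_increasing. nra.
Qed.

Lemma abspow_cont p t : 1 <= p -> continuous (fun x => abspow x p) t.
Proof.
  intros Hp. destruct (Req_dec t 0) as [->|Ht].
  - apply continuity_pt_filterlim. intros eps Heps.
    exists (Rmin 1 eps). split; [apply Rmin_pos; lra|].
    intros x [_ Hx]. simpl in *. unfold R_dist in *.
    unfold abspow at 2. destruct (Req_EM_T 0 0); [|lra].
    rewrite Rminus_0_r in *.
    rewrite Rabs_pos_eq by apply abspow_nonneg.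
    unfold abspow. destruct (Req_EM_T x 0); [lra|].
    pose proof (Rmin_l 1 eps). pose proof (Rmin_r 1 eps).
    pose proof (Rpower_le_self (Rabs x) p Hp). pose proof (Rabs_pos_lt x n). lra.
  - apply continuous_ext_loc with (g := fun x => exp (p * ln (Rabs x))).
    + pose proof (Rabs_pos_lt t Ht) as Ht0.
      exists (mkposreal _ Ht0). intros y Hy. simpl in Hy. unfold ball in Hy; simpl in Hy.
      unfold AbsRing_ball, abs, minus, plus, opp in Hy; simpl in Hy.
      unfold abspow. destruct (Req_EM_T y 0) as [->|]; [|reflexivity].
      exfalso. rewrite Rplus_0_l, Rabs_Ropp in Hy. lra.
    + apply (ex_derive_continuous (K := R_AbsRing) (V := R_NormedModule) (fun x => exp (p * ln (Rabs x)))). auto_derive. split; [exact Ht|split;[|auto]].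
      apply Rabs_pos_lt; exact Ht.
Qed.


Definition Cont (f : R -> R) := forall z, continuous f z.

Lemma ex_of_cont f a b : Cont f -> ex_RInt f a b.
Proof. intros H. apply (ex_RInt_continuous (V := R_CompleteNormedModule)). intros; apply H. Qed.

Lemma prim f : Cont f -> forall z, is_derive (fun t => RInt f 0 t) z (f z).
Proof.
  intros H z. apply is_derive_RInt with (a := 0).
  - apply filter_forall. intros b. apply RInt_correct. apply ex_of_cont; auto.
  - apply H.
Qed.

Lemma ftc f F a b : Cont f -> (forall z, is_derive F z (f z)) -> RInt f a b = F b - F a.
Proof.
  intros Hf HF. apply is_RInt_unique. apply (is_RInt_derive F f a b).
  - intros; apply HF.
  - intros; apply Hf.
Qed.

Lemma derive_lin F f u v : (forall z, is_derive F z (f z)) ->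
  forall y, is_derive (fun y => F (u * y + v)) y (u * f (u * y + v)).
Proof.
  intros HF y. apply (is_derive_comp F (fun y => u * y + v) y (f (u*y+v)) u).
  - apply HF.
  - auto_derive; auto; ring.
Qed.

Lemma cont_of_derive F f : (forall z, is_derive F z (f z)) -> Cont F.
Proof.
  intros H z. apply (ex_derive_continuous (K := R_AbsRing) (V := R_NormedModule) F).
  exists (f z); apply H.
Qed.

Lemma cont_lin f u v : Cont f -> Cont (fun y => f (u * y + v)).
Proof.
  intros H z. apply (continuous_comp (fun y => u * y + v) f).
  - apply (ex_derive_continuous (K := R_AbsRing) (V := R_NormedModule) (fun y => u * y + v)).
    auto_derive; auto.
  - apply H.
Qed.

Lemma reflect f a : Cont f -> RInt (fun y => f (- y)) (- a) a = RInt f (- a) a.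
Proof.
  intros Hf. set (K := fun t => RInt f 0 t).
  assert (HK : forall z, is_derive K z (f z)) by (apply prim; auto).
  rewrite (ftc f K) by auto.
  rewrite (ftc (fun y => f (- y)) (fun y => - K (-1 * y + 0))).
  - replace (-1 * a + 0) with (- a) by ring. replace (-1 * - a + 0) with a by ring.
    unfold K; simpl. ring.
  - intros z. apply (continuous_ext (fun y => f (-1 * y + 0))).
    + intros y; f_equal; ring.
    + apply (cont_lin f (-1) 0 Hf).
  - intros y. pose proof (derive_lin K f (-1) 0 HK y) as H.
    apply (is_derive_opp (fun y => K (-1 * y + 0))) in H.
    replace (f (- y)) with (opp (-1 * f (-1 * y + 0))).
    + exact H.
    + unfold opp; simpl. replace (-1 * y + 0) with (- y) by ring. ring.
Qed.

Lemma RInt_lin3 f g k a b : ex_RInt f a b -> ex_RInt g a b -> ex_RInt k a b ->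
  RInt (fun x => f x + g x - 2 * k x) a b = RInt f a b + RInt g a b - 2 * RInt k a b.
Proof.
  intros Hf Hg Hk.
  transitivity (RInt (fun x => minus (plus (f x) (g x)) (scal 2 (k x))) a b).
  { apply RInt_ext; intros; reflexivity. }
  apply is_RInt_unique.
  apply (is_RInt_minus (V := R_NormedModule)).
  - apply (is_RInt_plus (V := R_NormedModule)); apply (RInt_correct (V := R_CompleteNormedModule)); auto.
  - apply (is_RInt_scal (V := R_NormedModule)); apply (RInt_correct (V := R_CompleteNormedModule)); auto.
Qed.

Lemma RInt_sub f a a' b' b : a <= a' -> a' <= b' -> b' <= b -> Cont f ->
  (forall z, a <= z <= b -> 0 <= f z) -> RInt f a' b' <= RInt f a b.
Proof.
  intros H1 H2 H3 Hf Hpos.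
  rewrite <- (RInt_Chasles f a a' b) by (apply ex_of_cont; auto).
  rewrite <- (RInt_Chasles f a' b' b) by (apply ex_of_cont; auto).
  assert (0 <= RInt f a a').
  { apply RInt_ge_0; auto. apply ex_of_cont; auto. intros; apply Hpos; lra. }
  assert (0 <= RInt f b' b).
  { apply RInt_ge_0; auto. apply ex_of_cont; auto. intros; apply Hpos; lra. }
  unfold plus; simpl. lra.
Qed.

Lemma RInt_lower f a b m : a <= b -> Cont f -> (forall z, a <= z <= b -> m <= f z) ->
  m * (b - a) <= RInt f a b.
Proof.
  intros Hab Hf Hm.
  assert (RInt (fun _ => m) a b <= RInt f a b).
  { apply RInt_le; auto. apply ex_RInt_const. apply ex_of_cont; auto.
    intros; apply Hm; lra. }
  rewrite RInt_const in H. unfold scal in H; simpl in H. unfold mult in H; simpl in H. lra.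
Qed.


Lemma cont_lin3 f g k : Cont f -> Cont g -> Cont k -> Cont (fun x => f x + g x - 2 * k x).
Proof.
  intros Hf Hg Hk z.
  apply (continuous_ext (fun x => minus (plus (f x) (g x)) (scal 2 (k x)))).
  { intros; reflexivity. }
  apply (continuous_minus (V := R_NormedModule)).
  - apply (continuous_plus (V := R_NormedModule)); auto.
  - apply (continuous_scal_r (V := R_NormedModule)); auto.
Qed.

Definition Ii p l' c x := RInt (fun y => abspow (x - y - c) p) (- l') l'.
Definition Gp p t := RInt (fun s => abspow s p) 0 t.

Lemma g_cont p : 1 <= p -> Cont (fun t => abspow t p).
Proof. intros Hp z; apply abspow_cont; auto. Qed.

Lemma inner_cont p x c : 1 <= p -> Cont (fun y => abspow (x - y - c) p).
Proof.
  intros Hp z. apply (continuous_ext (fun y => abspow (-1 * y + (x - c)) p)).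
  - intros y; f_equal; ring.
  - apply (cont_lin (fun t => abspow t p)); apply g_cont; auto.
Qed.

Lemma Gp_der p : 1 <= p -> forall z, is_derive (Gp p) z (abspow z p).
Proof. intros Hp. apply (prim (fun t => abspow t p)). apply g_cont; auto. Qed.

Lemma I_eq p l' c x : 1 <= p -> Ii p l' c x = Gp p (x - c + l') - Gp p (x - c - l').
Proof.
  intros Hp. unfold Ii.
  rewrite (ftc _ (fun y => - Gp p (-1 * y + (x - c)))).
  - replace (-1 * l' + (x - c)) with (x - c - l') by ring.
    replace (-1 * - l' + (x - c)) with (x - c + l') by ring. simpl. ring.
  - apply inner_cont; auto.
  - intros y. pose proof (derive_lin (Gp p) (fun t => abspow t p) (-1) (x - c) (Gp_der p Hp) y) as H.
    apply (is_derive_opp (fun y => Gp p (-1 * y + (x - c)))) in H.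
    replace (abspow (x - y - c) p) with (opp (-1 * abspow (-1 * y + (x - c)) p)).
    + exact H.
    + unfold opp; simpl. replace (-1 * y + (x - c)) with (x - y - c) by ring. ring.
Qed.

Lemma I_cont p l' c : 1 <= p -> Cont (Ii p l' c).
Proof.
  intros Hp z.
  apply (continuous_ext (fun x => Gp p (1 * x + (- c + l')) - Gp p (1 * x + (- c - l')))).
  - intros x. rewrite I_eq by auto. f_equal; f_equal; ring.
  - apply (cont_of_derive _ (fun x => 1 * abspow (1 * x + (- c + l')) p - 1 * abspow (1 * x + (- c - l')) p)).
    intros y. apply (is_derive_minus (fun x => Gp p (1 * x + (- c + l'))) (fun x => Gp p (1 * x + (- c - l')))).
    + apply (derive_lin (Gp p) (fun t => abspow t p)). apply Gp_der; auto.
    + apply (derive_lin (Gp p) (fun t => abspow t p)). apply Gp_der; auto.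
Qed.

Lemma I_sym p l' c x : 1 <= p -> Ii p l' c (- x) = Ii p l' (- c) x.
Proof.
  intros Hp. unfold Ii.
  rewrite <- (reflect (fun y => abspow (x - y - - c) p) l').
  - apply RInt_ext. intros y _. rewrite <- abspow_opp. f_equal; ring.
  - apply inner_cont; auto.
Qed.

Lemma fp_I p l l' c : fp p l l' c = RInt (Ii p l' c) (- l) l.
Proof. reflexivity. Qed.

Lemma fp_sym p l l' c : 1 <= p -> fp p l l' (- c) = fp p l l' c.
Proof.
  intros Hp. rewrite !fp_I.
  rewrite <- (reflect (Ii p l' c) l) by (apply I_cont; auto).
  apply RInt_ext. intros x _. rewrite I_sym by auto. reflexivity.
Qed.


Definition Jc p l' c x := Ii p l' c x + Ii p l' (- c) x - 2 * Ii p l' 0 x.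

Lemma Jc_cont p l' c : 1 <= p -> Cont (Jc p l' c).
Proof. intros Hp. apply cont_lin3; apply I_cont; auto. Qed.

Lemma Jc_inner p l' c x : 1 <= p ->
  Jc p l' c x = RInt (fun y => abspow (x - y - c) p + abspow (x - y - - c) p - 2 * abspow (x - y - 0) p) (- l') l'.
Proof.
  intros Hp. unfold Jc, Ii. rewrite RInt_lin3; auto; apply ex_of_cont, inner_cont; auto.
Qed.

Lemma inner3_cont p x c : 1 <= p ->
  Cont (fun y => abspow (x - y - c) p + abspow (x - y - - c) p - 2 * abspow (x - y - 0) p).
Proof. intros Hp. apply cont_lin3; apply inner_cont; auto. Qed.

Lemma inner3_nonneg p x c y : 1 <= p ->
  0 <= abspow (x - y - c) p + abspow (x - y - - c) p - 2 * abspow (x - y - 0) p.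
Proof.
  intros Hp. pose proof (h_nonneg p c (x - y) Hp).
  replace (x - y - - c) with (x - y + c) by ring. replace (x - y - 0) with (x - y) by ring. lra.
Qed.

Lemma Jc_nonneg p l' c x : 1 <= p -> 0 < l' -> 0 <= Jc p l' c x.
Proof.
  intros Hp Hl. rewrite Jc_inner by auto. apply RInt_ge_0; [lra| |].
  - apply ex_of_cont, inner3_cont; auto.
  - intros; apply inner3_nonneg; auto.
Qed.

Lemma fp_diff p l l' c : 1 <= p -> 2 * (fp p l l' c - fp p l l' 0) = RInt (Jc p l' c) (- l) l.
Proof.
  intros Hp. unfold Jc. rewrite RInt_lin3 by (apply ex_of_cont, I_cont; auto).
  rewrite <- !fp_I. rewrite fp_sym by auto. ring.
Qed.

Theorem mainTheorem12 (p l l' : R) (hp : 1 <= p) (hl : 0 < l) (hl' : 0 < l') :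
  (forall c : R, fp p l l' 0 <= fp p l l' c) /\
  (forall c : R, fp p l l' c = fp p l l' 0 -> c = 0).
Proof.
  split.
  - intros c. pose proof (fp_diff p l l' c hp).
    assert (0 <= RInt (Jc p l' c) (- l) l).
    { apply RInt_ge_0; [lra| |].
      - apply ex_of_cont, Jc_cont; auto.
      - intros; apply Jc_nonneg; auto. }
    lra.
  - intros c Heq. destruct (Req_dec c 0) as [|Hc]; [assumption|exfalso].
    pose proof (fp_diff p l l' c hp) as Hd. rewrite Heq, Rminus_diag, Rmult_0_r in Hd.
    pose proof (Rabs_pos_lt c Hc) as Hc0.
    set (e := Rmin l (Rmin l' (Rabs c / 4))).
    assert (He : 0 < e) by (unfold e; repeat apply Rmin_pos; lra).
    assert (He1 : e <= l) by (unfold e; apply Rmin_l).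
    assert (He2 : e <= l') by (unfold e; eapply Rle_trans; [apply Rmin_r|apply Rmin_l]).
    assert (He3 : e <= Rabs c / 4) by (unfold e; eapply Rle_trans; [apply Rmin_r|apply Rmin_r]).
    set (m := 2 * (Rpower (Rabs c) p - Rpower (Rabs c / 2) p)).
    assert (Hm : 0 < m).
    { unfold m. assert (Rpower (Rabs c / 2) p < Rpower (Rabs c) p) by (apply Rlt_Rpower_l; lra). lra. }
    assert (HJ : forall x, - e <= x <= e -> m * (e - - e) <= Jc p l' c x).
    { intros x Hx. rewrite Jc_inner by auto.
      eapply Rle_trans; [|apply (RInt_sub _ (- l') (- e) e l'); try lra].
      - apply RInt_lower; [lra| apply inner3_cont; auto |].
        intros y Hy. pose proof (h_lower p c (x - y) hp Hc) as H.
        assert (Rabs (x - y) <= Rabs c / 2) by (apply Rabs_le; lra).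
        specialize (H H0). pose proof (abspow_nonneg (x - y) p).
        replace (x - y - - c) with (x - y + c) by ring. replace (x - y - 0) with (x - y) by ring.
        fold m in H. lra.
      - apply inner3_cont; auto.
      - intros; apply inner3_nonneg; auto. }
    assert ((m * (e - - e)) * (e - - e) <= RInt (Jc p l' c) (- l) l).
    { eapply Rle_trans; [|apply (RInt_sub _ (- l) (- e) e l); try lra].
      - apply RInt_lower; [lra| apply Jc_cont; auto | exact HJ].
      - apply Jc_cont; auto.
      - intros; apply Jc_nonneg; auto. }
    assert (0 < (m * (e - - e)) * (e - - e)) by (apply Rmult_lt_0_compat; [apply Rmult_lt_0_compat|]; lra).
    lra.
Qed.
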